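(* There are absolute constants $c,C>0$ such that for every $n$ and every connected simple undirected graph $G_0$ on $n$ nodes that has exactly $k\ge 1$ fewer edges than the complete graph on $n$ nodes, the triangulation process started from $G_0$ satisfies $$\Pr\big[G_{\lfloor c\,n\ln k\rfloor}\text{ is complete}\big]\le C e^{-k^{1/4}},$$ i.e., with probability at least $1-O(e^{-k^{1/4}})$ it takes $\Omega(n\log k)$ rounds to reach the complete graph.
   Context: Triangulation process: $G_0$ is a connected simple undirected graph on an $n$-node vertex set $V$. Given $G_t$, in round $t$ every node $x$ independently picks two neighbors $v,w$ of $x$ in $G_t$, independently and uniformly at random, and the edge $\{v,w\}$ is added (nothing happens if $v=w$ or the edge already exists); $G_{t+1}$ is $G_t$ together with all edges added in round $t$. Edges are never removed. *)

(* Defs.v *)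
From mathcomp Require Import all_boot.
From Stdlib Require Import Reals.

Set Implicit Arguments.
Unset Strict Implicit.
Unset Printing Implicit Defensive.

(* A graph on the vertex set 'I_n is given by its set of ORDERED adjacent
   pairs E : {set 'I_n * 'I_n}; an undirected edge {x,y} corresponds to
   the two pairs (x,y) and (y,x). *)
Definition graph (n : nat) := {set 'I_n * 'I_n}.

Definition simple_graph n (E : graph n) : Prop :=
  (forall x y : 'I_n, ((x, y) \in E) = ((y, x) \in E)) /\
  (forall x : 'I_n, (x, x) \notin E).

Definition connected_graph n (E : graph n) : Prop :=
  forall x y : 'I_n, connect (fun a b => (a, b) \in E) x y.

Definition num_edges n (E : graph n) : nat := #|E| %/ 2.

Definition complete_graph n (E : graph n) : Prop :=
  forall x y : 'I_n, x != y -> (x, y) \in E.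

Definition complete_graphb n (E : graph n) : bool :=
  [forall x : 'I_n, forall y : 'I_n, (x != y) ==> ((x, y) \in E)].

Definition nbhd n (E : graph n) (x : 'I_n) : {set 'I_n} :=
  [set v | (x, v) \in E].

Definition deg n (E : graph n) (x : 'I_n) : nat := #|nbhd E x|.

(* A round outcome: every node x chooses an ordered pair (v,w) of
   neighbours.  Probability that node x chooses (v,w): 1/deg(x)^2 if both
   are neighbours of x (independent uniform choices).  (For an isolated
   node -- which never occurs for connected graphs with n >= 2 -- we let it
   deterministically "choose" (x,x), which adds nothing.) *)
Definition choice_weight n (E : graph n) (x : 'I_n) (p : 'I_n * 'I_n) : R :=
  if deg E x == 0%N then (if p == (x, x) then 1%R else 0%R)
  else if (p.1 \in nbhd E x) && (p.2 \in nbhd E x)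
       then (/ (INR (deg E x) * INR (deg E x)))%R
       else 0%R.

Definition round_weight n (E : graph n) (c : {ffun 'I_n -> 'I_n * 'I_n}) : R :=
  \big[Rmult/1%R]_(x : 'I_n) choice_weight E x (c x).

Definition step n (E : graph n) (c : {ffun 'I_n -> 'I_n * 'I_n}) : graph n :=
  E :|: [set p : 'I_n * 'I_n | [exists x : 'I_n,
          (p.1 != p.2) && ((c x == p) || (c x == (p.2, p.1)))]].

(* prob_complete t E = Pr[ G_t is complete ] for the triangulation process
   started from G_0 = E (Markov chain, by first-step decomposition). *)
Fixpoint prob_complete n (t : nat) (E : graph n) : R :=
  match t with
  | 0 => if complete_graphb E then 1%R else 0%R
  | t'.+1 => \big[Rplus/0%R]_(c : {ffun 'I_n -> 'I_n * 'I_n})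
               (round_weight E c * prob_complete t' (step E c))%R
  end.

(* Main.v *)
From Stdlib Require Import Lra Lia.
From Stdlib Require Znat.
From mathcomp Require Import zify.
Require Import Defs.
From HB Require Import structures.
From mathcomp Require Import all_boot.
From Stdlib Require Import Reals.
Set Implicit Arguments. Unset Strict Implicit. Unset Printing Implicit Defensive.
Import Monoid.
Lemma RplusA' : associative Rplus. Proof. move=> *; by rewrite Rplus_assoc. Qed.
Lemma RmultA' : associative Rmult. Proof. move=> *; by rewrite Rmult_assoc. Qed.
HB.instance Definition _ := isComLaw.Build R 0%R Rplus RplusA' Rplus_comm Rplus_0_l.
HB.instance Definition _ := isComLaw.Build R 1%R Rmult RmultA' Rmult_comm Rmult_1_l.
HB.instance Definition _ := isMulLaw.Build R 0%R Rmult Rmult_0_l Rmult_0_r.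
HB.instance Definition _ := isAddLaw.Build R Rmult Rplus Rmult_plus_distr_r Rmult_plus_distr_l.


Open Scope R_scope.

Lemma Rsum_le (I : finType) (P : pred I) (F G : I -> R) :
  (forall i, P i -> F i <= G i) ->
  \big[Rplus/0]_(i | P i) F i <= \big[Rplus/0]_(i | P i) G i.
Proof.
move=> H; apply: (big_ind2 (fun x y => x <= y)) => //; first lra.
by move=> *; lra.
Qed.

Lemma Rsum_ge0 (I : finType) (P : pred I) (F : I -> R) :
  (forall i, P i -> 0 <= F i) -> 0 <= \big[Rplus/0]_(i | P i) F i.
Proof.
move=> H; apply: (big_ind (fun x => 0 <= x)) => //; first lra.
by move=> *; lra.
Qed.

Lemma Rprod_ge0 (I : finType) (P : pred I) (F : I -> R) :
  (forall i, P i -> 0 <= F i) -> 0 <= \big[Rmult/1]_(i | P i) F i.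
Proof.
move=> H; apply: (big_ind (fun x => 0 <= x)) => //; first lra.
by move=> *; apply: Rmult_le_pos.
Qed.

Lemma Rprod_le (I : finType) (P : pred I) (F G : I -> R) :
  (forall i, P i -> 0 <= F i <= G i) ->
  \big[Rmult/1]_(i | P i) F i <= \big[Rmult/1]_(i | P i) G i.
Proof.
move=> H.
have: 0 <= \big[Rmult/1]_(i | P i) F i <= \big[Rmult/1]_(i | P i) G i.
  apply: (big_ind2 (fun x y => 0 <= x <= y)) => //; first lra.
  move=> x1 x2 y1 y2 [h1 h2] [h3 h4]; split; first by apply: Rmult_le_pos.
  apply: Rmult_le_compat => //.
by case.
Qed.

Lemma Rsum_const (I : finType) (P : pred I) (c : R) :
  \big[Rplus/0]_(i | P i) c = INR #|P| * c.
Proof.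
rewrite big_const; elim: #|P| => [|m IH]; first by simpl; lra.
rewrite iterS IH S_INR; lra.
Qed.

Lemma Rprod_const (I : finType) (P : pred I) (c : R) :
  \big[Rmult/1]_(i | P i) c = c ^ #|P|.
Proof.
rewrite big_const; elim: #|P| => [|m IH] //=.
by rewrite IH.
Qed.

Lemma exp_sum (I : finType) (P : pred I) (F : I -> R) :
  exp (\big[Rplus/0]_(i | P i) F i) = \big[Rmult/1]_(i | P i) exp (F i).
Proof.
apply: (big_morph exp) => //; [by move=> *; rewrite exp_plus | by rewrite exp_0].
Qed.

Lemma Rsum_split (I : finType) (P : pred I) (F G : I -> R) :
  \big[Rplus/0]_(i | P i) (F i + G i) =
  \big[Rplus/0]_(i | P i) F i + \big[Rplus/0]_(i | P i) G i.
Proof. by rewrite big_split. Qed.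

Lemma Rsum_scale (I : finType) (P : pred I) (F : I -> R) c :
  \big[Rplus/0]_(i | P i) (c * F i) = c * \big[Rplus/0]_(i | P i) F i.
Proof. by rewrite big_distrr. Qed.

Section Graph.
Variable n : nat.
Implicit Types (E : graph n) (x : 'I_n) (c : {ffun 'I_n -> 'I_n * 'I_n}).

Definition Mis E : {set 'I_n * 'I_n} := [set p | (p.1 != p.2) && (p \notin E)].
Definition mu E := #|Mis E|.
Definition rowset E x : {set 'I_n} := [set v | (x != v) && ((x, v) \notin E)].
Definition row E x := #|rowset E x|.
Definition hitset E c : {set 'I_n} := [set x | c x \in Mis E].
Definition hits E c := #|hitset E c|.
Definition qx E x := \big[Rplus/0]_(p in Mis E) choice_weight E x p.

Lemma INR_deg_pos E x : deg E x != O -> 0 < INR (deg E x).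
Proof. move=> h; apply: lt_0_INR; apply/ltP; by rewrite lt0n. Qed.

Lemma cw_ge0 E x p : 0 <= choice_weight E x p.
Proof.
rewrite /choice_weight; case: eqP => [_|/eqP hd].
  case: eqP => _; lra.
case: ifP => _; last lra.
have h := INR_deg_pos hd.
apply: Rlt_le; apply: Rinv_0_lt_compat; by apply: Rmult_lt_0_compat.
Qed.

Lemma cw_le E x p : deg E x != O ->
  choice_weight E x p <= / (INR (deg E x) * INR (deg E x)).
Proof.
move=> hd; rewrite /choice_weight (negbTE hd).
have h := INR_deg_pos hd.
have h2 : 0 < / (INR (deg E x) * INR (deg E x)).
  apply: Rinv_0_lt_compat; by apply: Rmult_lt_0_compat.
case: ifP => _; lra.
Qed.

Lemma cw_sum E x : \big[Rplus/0]_p choice_weight E x p = 1.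
Proof.
rewrite /choice_weight; case: eqP => [_|/eqP hd].
  rewrite (bigD1 (x, x)) //= eqxx big1; first lra.
  by move=> p /negbTE ->.
rewrite -big_mkcond Rsum_const.
have -> : #|[pred p : 'I_n * 'I_n | (p.1 \in nbhd E x) && (p.2 \in nbhd E x)]|
          = (deg E x * deg E x)%nat.
  rewrite /deg -cardsX; apply: eq_card => p; rewrite !inE; done.
have h := INR_deg_pos hd.
rewrite mult_INR; field; lra.
Qed.

Lemma sum_h E x (S : {set 'I_n * 'I_n}) (lam : R) :
  \big[Rplus/0]_p (choice_weight E x p * (if p \in S then lam else 1)) =
  1 + (lam - 1) * \big[Rplus/0]_(p in S) choice_weight E x p.
Proof.
transitivity (\big[Rplus/0]_p choice_weight E x p + (lam - 1) *
   \big[Rplus/0]_p (if p \in S then choice_weight E x p else 0)).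
  rewrite -Rsum_scale -Rsum_split.
  apply: eq_bigr => p _; case: (p \in S); lra.
by rewrite cw_sum -big_mkcond.
Qed.

Lemma qx_ge0 E x : 0 <= qx E x.
Proof. apply: Rsum_ge0 => p _; exact: cw_ge0. Qed.

Lemma qx_le1 E x : qx E x <= 1.
Proof.
rewrite -(cw_sum E x) /qx big_mkcond /=.
apply: Rsum_le => p _; case: (p \in Mis E); have := cw_ge0 E x p; lra.
Qed.

Lemma qx_le E x : deg E x != O ->
  qx E x <= INR (mu E) * / (INR (deg E x) * INR (deg E x)).
Proof.
move=> hd; rewrite /qx.
apply: Rle_trans (_ : \big[Rplus/0]_(p in Mis E) / (INR (deg E x) * INR (deg E x)) <= _).
  apply: Rsum_le => p _; exact: cw_le.
rewrite Rsum_const; right; congr (INR _ * _).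
Qed.


Definition irrefl E := forall x, (x, x) \notin E.

Lemma deg_row E x : irrefl E -> (deg E x + row E x).+1 = n.
Proof.
move=> hE; rewrite /deg /row.
have hU : nbhd E x :|: rowset E x = [set~ x].
  apply/setP => v; rewrite !inE.
  case: (eqVneq v x) => [->|hv] /=; first by rewrite (negbTE (hE x)) ?eqxx.
  idtac.
  by case: ((x, v) \in E).
have hI : nbhd E x :&: rowset E x = set0.
  apply/setP => v; rewrite !inE; by case: ((x, v) \in E); rewrite ?andbF.
have := cardsU (nbhd E x) (rowset E x); rewrite hU hI cards0 cardsC1 card_ord.
move=> h; have hn : (0 < n)%nat by apply: leq_ltn_trans (ltn_ord x).
lia.
Qed.

Lemma sum_row E : (\sum_x row E x)%nat = mu E.
Proof.
rewrite /mu /row.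
transitivity (\sum_x \sum_v (if (x, v) \in Mis E then 1 else 0))%nat.
  apply: eq_bigr => x _; rewrite -big_mkcond /= -sum1_card.
  apply: eq_bigl => v; by rewrite !inE.
rewrite pair_big /= -sum1_card big_mkcond /=.
rewrite [in RHS]big_mkcond /=; by apply: eq_bigr => [[a b]] _.
Qed.

Lemma row_le_mu E x : (row E x <= mu E)%nat.
Proof. rewrite -sum_row (bigD1 x) //=; exact: leq_addr. Qed.

Definition lowset E : {set 'I_n} := [set x | (n < (row E x).*2 + 2)%nat].

Lemma low_count E : irrefl E ->
  (#|lowset E| * n.-1 <= (mu E).*2)%nat.
Proof.
move=> hE; rewrite -sum_row -muln2 big_distrl /=.
rewrite -sum1_card big_distrl /=.
apply: leq_trans (_ : \sum_(x in lowset E) (row E x * 2) <= _)%nat.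
  apply: leq_sum => x; rewrite inE => h; rewrite -mul2n in h; lia.
rewrite [X in (_ <= X)%nat](bigID [pred x | x \in lowset E]) /=.
exact: leq_addr.
Qed.

Definition symm E := forall x y, ((x, y) \in E) = ((y, x) \in E).

Lemma step_symm E c : symm E -> symm (step E c).
Proof.
move=> hE x y; rewrite /step !inE /= hE; congr orb.
apply/existsP/existsP => [] [z hz]; exists z; move: hz;
  by rewrite eq_sym orbC.
Qed.

Lemma step_irrefl E c : irrefl E -> irrefl (step E c).
Proof.
move=> hE x; rewrite /step !inE negb_or hE /=.
apply/existsP => [] [z]; by rewrite eqxx.
Qed.

Lemma mu_step E c : symm E ->
  (mu E <= mu (step E c) + (hits E c).*2)%nat.
Proof.
move=> hS; rewrite /mu /hits -addnn.
set H := hitset E c.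
pose T1 := [set c z | z in H].
pose T2 := [set ((c z).2, (c z).1) | z in H].
apply: leq_trans (_ : #|Mis (step E c) :|: (T1 :|: T2)| <= _)%nat.
  apply: subset_leq_card; apply/subsetP => p; rewrite !inE => /andP [hp hpE].
  rewrite (negbTE hpE) hp /=.
  case: (@existsP _ (fun z => (c z == p) || (c z == (p.2, p.1)))) => [[z hz]|_] //=.
  case/orP: hz => /eqP hz.
    apply/orP; left; rewrite /T1; apply/imsetP; exists z => //.
    by rewrite /H inE hz !inE hp hpE.
  apply/orP; right; rewrite /T2; apply/imsetP; exists z.
    rewrite /H inE hz !inE /= eq_sym hp /= -hS; by case: (p) hpE.
  by rewrite hz /=; case: (p).
apply: leq_trans (leq_card_setU _ _) _; rewrite leq_add2l.
apply: leq_trans (leq_card_setU _ _) _; apply: leq_add; exact: leq_imset_card.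
Qed.

Lemma hits_le E c : (hits E c <= n)%nat.
Proof. by rewrite /hits; apply: leq_trans (max_card _) _; rewrite card_ord. Qed.

Lemma prod_hits E c (lam : R) :
  \big[Rmult/1]_x (if c x \in Mis E then lam else 1) = lam ^ hits E c.
Proof.
rewrite -big_mkcond Rprod_const /hits; congr (_ ^ _).
by apply: eq_card => x; rewrite /hitset inE.
Qed.

End Graph.

Lemma inv_le4 (D N : R) : 0 < D -> 0 < N -> N <= 4 * D -> / D <= 4 * / N.
Proof.
move=> hD hN h.
apply: (Rmult_le_reg_r (D * N)); first by apply: Rmult_lt_0_compat.
have -> : / D * (D * N) = N by field; lra.
have -> : 4 * / N * (D * N) = 4 * D by field; lra.
exact: h.
Qed.

Section Graph2.
Variable n : nat.
Implicit Types (E : graph n) (x : 'I_n) (c : {ffun 'I_n -> 'I_n * 'I_n}).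

Lemma qx_high E x : (0 < n)%nat -> (n <= (deg E x).*2)%nat ->
  qx E x <= 4 * INR (mu E) * / (INR n * INR n).
Proof.
move=> hn hd.
have hd0 : deg E x != O by apply/eqP => h; rewrite h /= in hd; lia.
apply: Rle_trans (qx_le hd0) _.
rewrite Rmult_assoc (Rmult_comm 4) Rmult_assoc.
apply: Rmult_le_compat_l; first exact: pos_INR.
have h1 := INR_deg_pos hd0.
have h2 : 0 < INR n by apply: lt_0_INR; apply/ltP.
have h3 : INR n <= 2 * INR (deg E x).
  rewrite -mul2n in hd; have := le_INR _ _ (elimT leP hd); rewrite mult_INR /=; lra.
rewrite Rmult_comm; apply: inv_le4; nra.
Qed.

Lemma sumq_coupon E : irrefl E -> (2 <= n)%nat -> (4 * mu E <= n)%nat ->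
  \big[Rplus/0]_x qx E x <= 4 * INR (mu E) / INR n.
Proof.
move=> hE h2 h4.
apply: Rle_trans (_ : \big[Rplus/0]_x (4 * INR (mu E) * / (INR n * INR n)) <= _).
  apply: Rsum_le => x _; apply: qx_high; first lia.
  have := deg_row x hE; have := row_le_mu E x; lia.
rewrite Rsum_const cardT size_enum_ord.
have h2' : 0 < INR n by apply: lt_0_INR; apply/ltP; lia.
right; field; lra.
Qed.

Lemma sumq_gen E : irrefl E -> (2 <= n)%nat ->
  \big[Rplus/0]_x qx E x <= 4 * INR (mu E) / INR n + INR #|lowset E|.
Proof.
move=> hE h2.
apply: Rle_trans (_ : \big[Rplus/0]_x (4 * INR (mu E) * / (INR n * INR n)
   + (if x \in lowset E then 1 else 0)) <= _).
  apply: Rsum_le => x _.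
  have := qx_ge0 E x; have := qx_le1 E x.
  case: ifP => hl; last first.
    have : qx E x <= 4 * INR (mu E) * / (INR n * INR n).
      apply: qx_high; first lia.
      move: hl; rewrite /lowset inE => /negbT; have := deg_row x hE; lia.
    lra.
  have : 0 <= 4 * INR (mu E) * / (INR n * INR n).
    have h2' : 0 < INR n by apply: lt_0_INR; apply/ltP; lia.
    apply: Rmult_le_pos; first by have := pos_INR (mu E); lra.
    apply: Rlt_le; apply: Rinv_0_lt_compat; nra.
  lra.
rewrite Rsum_split -big_mkcond Rsum_const Rsum_const cardT size_enum_ord.
have h2' : 0 < INR n by apply: lt_0_INR; apply/ltP; lia.
have -> : #|[pred x | x \in lowset E]| = #|lowset E| by apply: eq_card.
apply: Rplus_le_compat; right; [field; lra | lra].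
Qed.

End Graph2.

Section Proc.
Variable n : nat.
Implicit Types (E : graph n) (x : 'I_n) (c : {ffun 'I_n -> 'I_n * 'I_n}).

Lemma factor E (g : 'I_n -> 'I_n * 'I_n -> R) :
  \big[Rplus/0%R]_(c : {ffun 'I_n -> 'I_n * 'I_n})
     (round_weight E c * \big[Rmult/1%R]_x g x (c x))%R =
  \big[Rmult/1%R]_x \big[Rplus/0%R]_p (choice_weight E x p * g x p)%R.
Proof.
rewrite bigA_distr_bigA; apply: eq_bigr => c _.
by rewrite /round_weight -big_split.
Qed.

Lemma w_ge0 E c : 0 <= round_weight E c.
Proof. apply: Rprod_ge0 => x _; exact: cw_ge0. Qed.

Lemma w_sum E : \big[Rplus/0]_c round_weight E c = 1.
Proof.
transitivity (\big[Rplus/0]_c (round_weight E c * \big[Rmult/1]_(x : 'I_n) (fun _ _ => 1) x (c x))).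
  apply: eq_bigr => c _; rewrite Rprod_const pow1; ring.
rewrite (factor E (fun _ _ => 1)) (eq_bigr (fun _ => 1)); first by rewrite Rprod_const pow1.
move=> x _; rewrite -[RHS](cw_sum E x); apply: eq_bigr => p _; ring.
Qed.

Lemma w_hits E (lam : R) :
  \big[Rplus/0]_c (round_weight E c * lam ^ hits E c) =
  \big[Rmult/1]_x (1 + (lam - 1) * qx E x).
Proof.
under eq_bigr do rewrite -prod_hits.
rewrite (factor E (fun x p => if p \in Mis E then lam else 1)); apply: eq_bigr => x _; exact: sum_h.
Qed.

Lemma w_hits_le E (lam : R) : 1 <= lam ->
  \big[Rplus/0]_c (round_weight E c * lam ^ hits E c) <=
  exp ((lam - 1) * \big[Rplus/0]_x qx E x).
Proof.
move=> hl; rewrite w_hits -Rsum_scale exp_sum.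
apply: Rprod_le => x _; split.
  have := qx_ge0 E x; nra.
exact: exp_ineq1_le.
Qed.

Lemma wsum_le E (F G : {ffun 'I_n -> 'I_n * 'I_n} -> R) :
  (forall c, F c <= G c) ->
  \big[Rplus/0]_c (round_weight E c * F c) <= \big[Rplus/0]_c (round_weight E c * G c).
Proof.
move=> h; apply: Rsum_le => c _; apply: Rmult_le_compat_l; [exact: w_ge0 | exact: h].
Qed.

Lemma wsum_const E (F : {ffun 'I_n -> 'I_n * 'I_n} -> R) (b : R) :
  \big[Rplus/0]_c (round_weight E c * (F c + b)) =
  \big[Rplus/0]_c (round_weight E c * F c) + b.
Proof.
transitivity (\big[Rplus/0]_c (round_weight E c * F c) + b * \big[Rplus/0]_c round_weight E c).
  rewrite -Rsum_scale -Rsum_split; apply: eq_bigr => c _; ring.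
by rewrite w_sum Rmult_1_r.
Qed.

Lemma wsum_scale E (F : {ffun 'I_n -> 'I_n * 'I_n} -> R) (b : R) :
  \big[Rplus/0]_c (round_weight E c * (b * F c)) =
  b * \big[Rplus/0]_c (round_weight E c * F c).
Proof. rewrite -Rsum_scale; apply: eq_bigr => c _; ring. Qed.

Lemma complete_mu E : complete_graphb E -> mu E = O.
Proof.
move=> /forallP hc; apply/eqP; rewrite cards_eq0; apply/eqP/setP => [[a b]].
rewrite !inE /=; apply/negbTE; rewrite negb_and negbK.
move: (hc a) => /forallP /(_ b); rewrite negbK; by case: (a == b).
Qed.

Lemma prob_ge0 t E : 0 <= prob_complete t E.
Proof.
elim: t E => [|t IH] E /=; first by case: ifP => _; lra.
apply: Rsum_ge0 => c _; apply: Rmult_le_pos; [exact: w_ge0 | exact: IH].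
Qed.

Lemma prob_le1 t E : prob_complete t E <= 1.
Proof.
elim: t E => [|t IH] E /=; first by case: ifP => _; lra.
rewrite -(w_sum E); apply: Rsum_le => c _.
have := w_ge0 E c; have := IH (step E c); have := prob_ge0 t (step E c); nra.
Qed.

End Proc.

Lemma exp_mulINR (x : R) (m : nat) : exp (x * INR m) = exp x ^ m.
Proof.
elim: m => [|m IH]; first by rewrite /= Rmult_0_r exp_0.
rewrite S_INR Rmult_plus_distr_l Rmult_1_r exp_plus IH /=; ring.
Qed.

Lemma pow_le_dec (a : R) (m k : nat) : 0 <= a <= 1 -> (m <= k)%nat -> a ^ k <= a ^ m.
Proof.
move=> ha hmk; rewrite -(subnKC hmk) pow_add.
have : 0 <= a ^ m by apply: pow_le; lra.
have : a ^ (k - m) <= 1 by rewrite -(pow1 (k - m)); apply: pow_incr; lra.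
have : 0 <= a ^ (k - m) by apply: pow_le; lra.
nra.
Qed.

Lemma exp_le_inv (u : R) : 0 <= u <= 1/2 -> exp u <= 1 + 2 * u.
Proof.
move=> hu.
have h1 := exp_ineq1_le (- u).
have h2 : exp u * exp (- u) = 1 by rewrite -exp_plus Rplus_opp_r exp_0.
have h3 : 0 < exp u := exp_pos u.
nra.
Qed.

Lemma key_step (a N : R) : 1/2 <= a <= 1 -> 384 <= N ->
  a * exp ((/ (a * a) - 1) * (12 / N)) <= 1 - (1 - a) * (1 - 192 / N).
Proof.
move=> ha hN.
have hA : / (a * a) - 1 = (1 - a) * (1 + a) / (a * a) by field; lra.
have hB : 0 <= (1 - a) * (1 + a) / (a * a) <= 8 * (1 - a).
  split.
    apply: Rmult_le_pos; first nra.
    apply: Rlt_le; apply: Rinv_0_lt_compat; nra.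
  apply: (Rmult_le_reg_r (a * a)); first nra.
  have -> : (1 - a) * (1 + a) / (a * a) * (a * a) = (1 - a) * (1 + a) by field; lra.
  have : 1 + a <= 8 * (a * a) by nra.
  have : 0 <= 1 - a by lra.
  nra.
set u := (/ (a * a) - 1) * (12 / N).
have hN' : 0 < / N by apply: Rinv_0_lt_compat; lra.
have hNN : / N <= / 384 by apply: Rinv_le_contravar; lra.
have hu : 0 <= u <= 96 * (1 - a) / N.
  rewrite /u hA /Rdiv; split.
    apply: Rmult_le_pos; first by move: hB; rewrite /Rdiv; lra.
    lra.
  move: hB; rewrite /Rdiv => hB.
  have : (1 - a) * (1 + a) * / (a * a) * (12 * / N) <= 8 * (1 - a) * (12 * / N).
    apply: Rmult_le_compat_r; lra.
  lra.
have hu2 : 0 <= u <= 1/2.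
  split; first lra.
  apply: Rle_trans (proj2 hu) _; rewrite /Rdiv.
  have : (1 - a) * / N <= 1/2 * / 384 by apply: Rmult_le_compat; lra.
  lra.
have he := exp_le_inv hu2.
have : a * exp u <= a * (1 + 2 * u) by apply: Rmult_le_compat_l; lra.
move: hu; rewrite /Rdiv => hu.
have : a * (1 + 2 * u) <= a + 2 * u by nra.
have -> : 1 - (1 - a) * (1 - 192 * / N) = a + 192 * (1 - a) * / N by ring.
lra.
Qed.

Lemma exp_le (x y : R) : x <= y -> exp x <= exp y.
Proof. case/Rle_lt_or_eq_dec => [h|->]; [left; exact: exp_increasing | by right]. Qed.

Section Main.
Variable n : nat.
Hypothesis hn : (384 <= n)%nat.
Implicit Types (E : graph n) (x : 'I_n) (c : {ffun 'I_n -> 'I_n * 'I_n}).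

Definition L := (n %/ 8)%nat.
Definition rr := 1 - 192 / INR n.
Definition aa t := 1 - / 2 * rr ^ t.
Definition eps := exp 40 * / exp (INR (L %/ 2)).
Definition Phi t m := aa t ^ minn m L + INR t * eps.

Lemma INRn : 384 <= INR n.
Proof. have := le_INR _ _ (elimT leP hn); rewrite /=; lra. Qed.

Lemma rr_bounds : 1/2 <= rr <= 1.
Proof.
have h := INRn; rewrite /rr /Rdiv.
have h1 : 0 < / INR n by apply: Rinv_0_lt_compat; lra.
have h2 : / INR n <= / 384 by apply: Rinv_le_contravar; lra.
split; lra.
Qed.

Lemma aa_bounds t : 1/2 <= aa t <= 1.
Proof.
have h := rr_bounds; rewrite /aa.
have : 0 <= rr ^ t <= 1.
  split; first by apply: pow_le; lra.
  rewrite -(pow1 t); apply: pow_incr; lra.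
lra.
Qed.

Lemma aaS t : aa t.+1 = 1 - (1 - aa t) * rr.
Proof. rewrite /aa /=; ring. Qed.

Lemma aa_incr t : aa t <= aa t.+1.
Proof.
rewrite aaS; have := aa_bounds t; have := rr_bounds; nra.
Qed.

Lemma eps_ge0 : 0 <= eps.
Proof.
rewrite /eps; apply: Rmult_le_pos; first exact: Rlt_le (exp_pos _).
apply: Rlt_le; apply: Rinv_0_lt_compat; exact: exp_pos.
Qed.

Lemma Phi_ge0 t m : 0 <= Phi t m.
Proof.
rewrite /Phi; have := aa_bounds t => ha.
have : 0 <= aa t ^ minn m L by apply: pow_le; lra.
have : 0 <= INR t * eps by apply: Rmult_le_pos; [exact: pos_INR | exact: eps_ge0].
lra.
Qed.

Lemma one_step E t : symm E -> irrefl E ->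
  \big[Rplus/0]_c (round_weight E c * Phi t (mu (step E c))) <= Phi t.+1 (mu E).
Proof.
move=> hS hI.
rewrite /Phi (wsum_const E (fun c => aa t ^ minn (mu (step E c)) L)) S_INR.
suff : \big[Rplus/0]_c (round_weight E c * aa t ^ minn (mu (step E c)) L)
         <= aa t.+1 ^ minn (mu E) L + eps.
  move=> h; lra.
have ha := aa_bounds t.
have ha1 := aa_bounds t.+1.
have hinc := aa_incr t.
have hnR := INRn.
have hLpow : aa t ^ L <= aa t.+1 ^ L by apply: pow_incr; lra.
have hmu c := mu_step c hS.
have hR c := hits_le E c.
have hn2 : (2 <= n)%nat by lia.
case: (leqP (4 * mu E) n) => hA.
-
  move: ha hinc hLpow; set a := aa t => ha hinc hLpow; set lam := / (a * a).
  have hlam : 1 <= lam.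
    rewrite /lam; have : a * a <= 1 by nra.
    move=> h; rewrite -Rinv_1; apply: Rinv_le_contravar; nra.
  have pt c : a ^ minn (mu (step E c)) L <= a ^ minn (mu E) L * lam ^ hits E c.
    have hle : (minn (mu E) L <= minn (mu (step E c)) L + 2 * hits E c)%nat.
      have := hmu c; rewrite -mul2n; lia.
    have h1 := pow_le_dec (conj (Rlt_le _ _ (Rlt_le_trans 0 (1/2) a ltac:(lra) (proj1 ha))) (proj2 ha)) hle.
    rewrite pow_add pow_mult in h1.
    have h2 : (a ^ 2) ^ hits E c * lam ^ hits E c = 1.
      rewrite -Rpow_mult_distr /lam (_ : a ^ 2 * / (a * a) = 1); first exact: pow1.
      field; lra.
    have h3 : 0 <= lam ^ hits E c by apply: pow_le; lra.
    have h4 : 0 <= a ^ minn (mu (step E c)) L by apply: pow_le; lra.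
    have h5 : a ^ minn (mu (step E c)) L = a ^ minn (mu (step E c)) L * (a ^ 2) ^ hits E c * lam ^ hits E c.
      by rewrite Rmult_assoc h2 Rmult_1_r.
    rewrite h5; apply: Rmult_le_compat_r => //.
  apply: Rle_trans (wsum_le (F := fun c => a ^ minn (mu (step E c)) L) E pt) _.
  rewrite wsum_scale.
  have hf0 : 0 <= a ^ minn (mu E) L by apply: pow_le; lra.
  apply: Rle_trans (Rmult_le_compat_l _ _ _ hf0 (w_hits_le E hlam)) _.
  have hsum := sumq_coupon hI hn2 hA.
  have hmuf : INR (mu E) <= 3 * INR (minn (mu E) L).
    have : (mu E <= 3 * minn (mu E) L)%nat by rewrite /L; lia.
    move=> /leP /le_INR; rewrite mult_INR /=; lra.
  have hexp : exp ((lam - 1) * \big[Rplus/0]_x qx E x)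
               <= exp ((lam - 1) * (12 / INR n) * INR (minn (mu E) L)).
    apply: exp_le.
    rewrite Rmult_assoc; apply: Rmult_le_compat_l; first lra.
    apply: Rle_trans hsum _; rewrite /Rdiv.
    have : 0 < / INR n by apply: Rinv_0_lt_compat; lra.
    nra.
  apply: Rle_trans (Rmult_le_compat_l _ _ _ hf0 hexp) _.
  rewrite exp_mulINR -Rpow_mult_distr.
  apply: Rle_trans (_ : _ <= aa t.+1 ^ minn (mu E) L) _; last by have := eps_ge0; lra.
  apply: pow_incr; split.
    apply: Rmult_le_pos; [lra | exact: Rlt_le (exp_pos _)].
  rewrite aaS /rr /lam; apply: key_step => //.
have hf : minn (mu E) L = L by rewrite /L; lia.
rewrite hf.
case: (leqP (mu E) (3 * n)) => hB.
-
  set K := / exp (INR (L %/ 2)).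
  have hK : 0 <= K by apply: Rlt_le; apply: Rinv_0_lt_compat; exact: exp_pos.
  have he1 : 1 <= exp 1 by have := exp_ineq1_le 1; lra.
  have pt c : aa t ^ minn (mu (step E c)) L <= K * exp 1 ^ hits E c + aa t ^ L.
    have h0 : 0 <= K * exp 1 ^ hits E c by apply: Rmult_le_pos => //; apply: pow_le; lra.
    case: (boolP (L <= mu (step E c))%nat) => hl.
      have -> : minn (mu (step E c)) L = L by lia.
      lra.
    have hhit : (L %/ 2 <= hits E c)%nat.
      have := hmu c; rewrite -addnn; move: hl; rewrite -ltnNge; rewrite /L in hA *; lia.
    have h1 : aa t ^ minn (mu (step E c)) L <= 1.
      rewrite -(pow_O (aa t)); apply: pow_le_dec; [lra | lia].
    have h2 : 1 <= K * exp 1 ^ hits E c.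
      rewrite -exp_mulINR Rmult_1_l /K.
      have h3 : exp (INR (L %/ 2)) <= exp (INR (hits E c)) by apply: exp_le; apply: le_INR; apply/leP.
      have h4 := exp_pos (INR (L %/ 2)).
      apply: (Rmult_le_reg_l (exp (INR (L %/ 2)))) => //.
      rewrite -Rmult_assoc Rinv_r; lra.
    have : 0 <= aa t ^ L by apply: pow_le; lra.
    lra.
  apply: Rle_trans (wsum_le (F := fun c => aa t ^ minn (mu (step E c)) L) E pt) _.
  rewrite (wsum_const E (fun c => K * exp 1 ^ hits E c)) wsum_scale.
  suff : K * \big[Rplus/0]_c (round_weight E c * exp 1 ^ hits E c) <= eps by lra.
  apply: Rle_trans (Rmult_le_compat_l _ _ _ hK (w_hits_le E he1)) _.
  rewrite /eps Rmult_comm; apply: Rmult_le_compat_r => //; apply: exp_le.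
  have hq := sumq_gen hI hn2.
  have hlow := low_count hI.
  have hl7 : (#|lowset E| <= 7)%nat by nia.
  have hl7' : INR #|lowset E| <= 7 by have := le_INR _ _ (elimT leP hl7); rewrite /=; lra.
  have hm : 4 * INR (mu E) / INR n <= 12.
    have : INR (mu E) <= 3 * INR n by have := le_INR _ _ (elimT leP hB); rewrite mult_INR /=; lra.
    move=> h; apply: (Rmult_le_reg_r (INR n)); first lra.
    rewrite /Rdiv Rmult_assoc Rinv_l; lra.
  have hq0 : 0 <= \big[Rplus/0]_x qx E x by apply: Rsum_ge0 => x _; exact: qx_ge0.
  have he3 := exp_le_3.
  nra.
-
  have pt c : aa t ^ minn (mu (step E c)) L = aa t ^ L.
    have := hmu c; have := hR c; rewrite /L in hB *; move=> h1 h2.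
    have -> : minn (mu (step E c)) (n %/ 8) = (n %/ 8)%nat by lia.
    done.
  rewrite (eq_bigr (fun c => aa t ^ L * round_weight E c)); last by move=> c _; rewrite pt Rmult_comm.
  rewrite Rsum_scale w_sum; have := eps_ge0; lra.
Qed.

Lemma prob_Phi t E : symm E -> irrefl E -> prob_complete t E <= Phi t (mu E).
Proof.
elim: t E => [|t IH] E hS hI /=.
  case: ifP => hc; last exact: Phi_ge0.
  rewrite complete_mu // /Phi min0n pow_O /= Rmult_0_l; lra.
apply: Rle_trans (one_step t hS hI).
apply: Rsum_le => c _; apply: Rmult_le_compat_l; first exact: w_ge0.
apply: IH; [exact: step_symm | exact: step_irrefl].
Qed.

End Main.

Lemma T_bound x : 0 <= x -> INR (Z.to_nat (Int_part x)) <= x.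
Proof.
move=> hx; have [h1 _] := base_Int_part x.
move: h1; case: (Int_part x) => [|p|p] /= h1; try lra.
by rewrite INR_IZR_INZ Znat.positive_nat_Z.
Qed.

Lemma one_minus_exp x : 0 <= x <= 1/2 -> exp (- (2 * x)) <= 1 - x.
Proof.
move=> hx.
have h1 := exp_ineq1_le (2 * x).
have h2 : exp (2 * x) * exp (- (2 * x)) = 1 by rewrite -exp_plus Rplus_opp_r exp_0.
have h3 := exp_pos (- (2 * x)).
have h4 := exp_pos (2 * x).
nra.
Qed.

Lemma term1 (s j : R) : 1 <= s -> s ^ 4 / 16 <= j ->
  exp (- (j * / (2 * s))) <= exp 1024 * exp (- (s ^ 2)).
Proof.
move=> hs hj; rewrite -exp_plus; apply: exp_le.
have h1 : s ^ 3 / 32 <= j * / (2 * s).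
  apply: (Rmult_le_reg_r (2 * s)); first lra.
  rewrite Rmult_assoc Rinv_l; last lra.
  have -> : s ^ 3 / 32 * (2 * s) = s ^ 4 / 16 by field.
  lra.
suff : s ^ 2 - s ^ 3 / 32 <= 1024 by lra.
case: (Rle_lt_dec s 32) => h.
  have : 0 <= s ^ 3 by apply: pow_le; lra.
  have : s ^ 2 <= 1024 by rewrite /=; nra.
  lra.
have : s ^ 2 <= s ^ 3 / 32 by rewrite /=; nra.
lra.
Qed.

Lemma exp_ge2 : 2 <= exp 1.
Proof. have := exp_ineq1_le 1; lra. Qed.

Lemma term2 (N T w : R) : 1 <= N -> 0 <= T <= N ^ 3 -> 0 <= w -> w * w <= N ->
  T * exp (41 - N / 16) <= exp 77 * exp (- w).
Proof.
move=> hN hT hw hwN.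
have e1 : exp (41 - N / 16) = exp 41 * (exp (- (N / 32)) * exp (- (N / 32))).
  by rewrite -!exp_plus; congr exp; field.
have e2 : exp 77 = exp 41 * (exp 28 * exp 8) by rewrite -!exp_plus; congr exp; ring.
rewrite e1 e2.
have hA : T * exp (- (N / 32)) <= exp 28.
  rewrite exp_Ropp.
  have hE := exp_pos (N / 32).
  apply: (Rmult_le_reg_r (exp (N / 32))) => //.
  rewrite Rmult_assoc Rinv_l; last lra.
  rewrite Rmult_1_r.
  have h4 : exp (N / 32) = exp (N / 128) ^ 4.
    by rewrite -exp_mulINR; congr exp; rewrite /=; field.
  have h5 : (N / 128) ^ 4 <= exp (N / 128) ^ 4.
    apply: pow_incr; have := exp_ineq1_le (N / 128); lra.
  have h6 : 2 ^ 28 <= exp 28.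
    rewrite -(Rmult_1_l 28) (_ : 28 = INR 28); last by rewrite /=; lra.
    rewrite exp_mulINR; apply: pow_incr; have := exp_ge2; lra.
  have h7 : N ^ 3 <= N ^ 4 by rewrite /=; nra.
  have h8 : N ^ 4 = 2 ^ 28 * (N / 128) ^ 4 by rewrite /=; field.
  have h9 : 0 <= (N / 128) ^ 4 by apply: pow_le; lra.
  have : 2 ^ 28 * (N / 128) ^ 4 <= exp 28 * exp (N / 128) ^ 4.
    apply: Rmult_le_compat => //; apply: pow_le; lra.
  rewrite h4; lra.
have hB : exp (- (N / 32)) <= exp 8 * exp (- w).
  rewrite -exp_plus; apply: exp_le.
  have : 0 <= w * w - 32 * w + 256.
    replace (w * w - 32 * w + 256) with ((w - 16) * (w - 16)) by ring; exact: Rle_0_sqr.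
  lra.
have h0 : 0 <= exp (- (N / 32)) := Rlt_le _ _ (exp_pos _).
have h0' : 0 <= exp 41 := Rlt_le _ _ (exp_pos _).
have h0'' : 0 <= exp 28 := Rlt_le _ _ (exp_pos _).
have : T * (exp (- (N / 32)) * exp (- (N / 32))) <= exp 28 * (exp 8 * exp (- w)).
  rewrite -Rmult_assoc; apply: Rmult_le_compat => //.
  apply: Rmult_le_pos; lra.
move=> h.
replace (T * (exp 41 * (exp (- (N / 32)) * exp (- (N / 32)))))
  with (exp 41 * (T * (exp (- (N / 32)) * exp (- (N / 32))))) by ring.
replace (exp 41 * (exp 28 * exp 8) * exp (- w))
  with (exp 41 * (exp 28 * (exp 8 * exp (- w)))) by ring.
exact: Rmult_le_compat_l.
Qed.

Section Count.
Variable n : nat.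
Implicit Types (E : graph n).

Lemma card_E_mu E : irrefl E -> (#|E| + mu E = n * n.-1)%nat.
Proof.
move=> hI.
set D := [set p : 'I_n * 'I_n | p.1 != p.2].
have hED : E \subset D.
  apply/subsetP => [[a b]] h; rewrite inE /=; apply/eqP => hab.
  by rewrite hab (negbTE (hI b)) in h.
have hM : Mis E = D :\: E by apply/setP => p; rewrite !inE andbC.
have hC : ~: D = [set (x, x) | x : 'I_n].
  apply/setP => [[a b]]; rewrite !inE /= negbK.
  apply/eqP/imsetP => [<-|[x _ [-> ->]]] //; by exists a.
have hDc : #|D| = (n * n.-1)%nat.
  have := cardsC D; rewrite hC card_imset; last by move=> x y [].
  rewrite card_prod card_ord => h.
  rewrite -subn1 mulnBr muln1; lia.
rewrite /mu hM cardsD (setIidPr hED).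
rewrite subnKC; [exact: hDc | exact: subset_leq_card].
Qed.

Lemma k_le_mu E k : irrefl E -> (1 <= k)%nat ->
  'C(n, 2) = (num_edges E + k)%nat -> (k <= mu E /\ 2 * k <= n * n.-1)%nat.
Proof.
move=> hI hk; rewrite bin2 -divn2 /num_edges => h.
have := card_E_mu hI; lia.
Qed.

End Count.

Close Scope R_scope.

Theorem theorem9 :
  exists c C : R, (0 < c)%R /\ (0 < C)%R /\
    forall (n : nat) (E : graph n) (k : nat),
      simple_graph E -> connected_graph E ->
      (1 <= k)%N ->
      'C(n, 2) = (num_edges E + k)%N ->
      (prob_complete (Z.to_nat (Int_part (c * INR n * ln (INR k)))) E
         <= C * exp (- Rpower (INR k) (1 / 4)))%R.
Proof.
Open Scope R_scope.
exists (1/3072), (exp 1024 + exp 77 + exp 20).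
have he1 := exp_pos 1024; have he2 := exp_pos 77; have he3 := exp_pos 20.
split; first lra; split; first lra.
move=> n E k [hS hI] _ hk hC.
have [hkm h2k] := k_le_mu hI hk hC.
have hK1 : 1 <= INR k by have := le_INR _ _ (elimT leP hk); rewrite /=; lra.
set lk := ln (INR k).
have hlk : 0 <= lk.
  case: (Rle_lt_dec 0 lk) => // h; have := exp_increasing _ _ h.
  rewrite exp_0 /lk exp_ln; lra.
set s := exp (lk / 8).
have -> : Rpower (INR k) (1 / 4) = s ^ 2.
  by rewrite /Rpower /s -exp_mulINR; congr exp; rewrite /lk /=; field.
have hs1 : 1 <= s by have := exp_ineq1_le (lk / 8); rewrite /s; lra.
have hs8 : s ^ 8 = INR k.
  rewrite /s -exp_mulINR (_ : lk / 8 * INR 8 = lk); last by rewrite /=; field.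
  rewrite /lk exp_ln //; lra.
have hnR : 0 <= INR n := pos_INR n.
have hKn : INR k <= INR n * INR n.
  have hnn : (n * n.-1 <= n * n)%nat by apply: leq_mul => //; exact: leq_pred.
  have : (k <= n * n)%nat by lia.
  move=> /leP /le_INR; rewrite mult_INR; lra.
have hs4n : s ^ 4 <= INR n.
  have h0 : 0 <= s ^ 4 by apply: pow_le; lra.
  have : s ^ 4 * s ^ 4 <= INR n * INR n by rewrite -pow_add /=; rewrite /= in hs8; lra.
  nra.
have hw0 : 0 <= s ^ 2 by apply: pow_le; lra.
have hww : s ^ 2 * s ^ 2 <= INR n by rewrite -pow_add.
set T := Z.to_nat _.
have hT : INR T <= 1 / 3072 * INR n * lk.
  apply: T_bound; apply: Rmult_le_pos => //; lra.
case: (leqP 384 n) => hn; last first.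
  apply: Rle_trans (prob_le1 _ _) _.
  have hn' : INR n <= 384 by have := le_INR _ _ (elimT leP (ltnW hn)); rewrite /=; lra.
  have hw : s ^ 2 <= 20 by nra.
  have : 1 <= exp 20 * exp (- s ^ 2).
    rewrite -exp_plus -exp_0; apply: exp_le; lra.
  have : 0 <= (exp 1024 + exp 77) * exp (- s ^ 2).
    apply: Rmult_le_pos; [lra | exact: Rlt_le (exp_pos _)].
  lra.
have hP := prob_Phi hn T hS hI.
apply: Rle_trans hP _.
rewrite /Phi.
have hnR' := INRn hn.
have hj : s ^ 4 / 16 <= INR (minn (mu E) (L n)).
  case: (leqP (mu E) (L n)) => hm.
    have : INR k <= INR (mu E) by apply: le_INR; apply/leP.
    have : s ^ 4 <= s ^ 8 by apply: Rle_pow; [lra | lia].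
    have : 0 <= s ^ 4 by apply: pow_le; lra.
    lra.
  have : INR n <= 16 * INR (L n).
    have : (n <= 16 * L n)%nat by rewrite /L; lia.
    move=> /leP /le_INR; rewrite mult_INR /=; lra.
  lra.
have hrr : exp (- (2 * (192 / INR n))) <= rr n.
  rewrite /rr; apply: one_minus_exp; split.
    apply: Rmult_le_pos; first lra; apply: Rlt_le; apply: Rinv_0_lt_compat; lra.
  apply: (Rmult_le_reg_r (INR n)); first lra.
  rewrite /Rdiv Rmult_assoc Rinv_l; lra.
have hrrT : / s <= rr n ^ T.
  apply: Rle_trans (_ : exp (- (2 * (192 / INR n))) ^ T <= _); last first.
    apply: pow_incr; split => //; exact: Rlt_le (exp_pos _).
  rewrite -exp_mulINR /s -exp_Ropp; apply: exp_le.
  suff : 2 * (192 / INR n) * INR T <= lk / 8 by lra.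
  apply: Rle_trans (_ : 2 * (192 / INR n) * (1 / 3072 * INR n * lk) <= _).
    apply: Rmult_le_compat_l => //.
    have : 0 < / INR n by apply: Rinv_0_lt_compat; lra.
    rewrite /Rdiv; nra.
  right; field; lra.
have ha := aa_bounds hn T.
have h1a : / 2 * / s <= 1 - aa n T.
  rewrite /aa; have : 0 < / 2 by lra. nra.
have hpow : aa n T ^ minn (mu E) (L n) <= exp (- (INR (minn (mu E) (L n)) * / (2 * s))).
  apply: Rle_trans (_ : exp (- (1 - aa n T)) ^ minn (mu E) (L n) <= _).
    apply: pow_incr; split; first lra.
    have := exp_ineq1_le (- (1 - aa n T)); lra.
  rewrite -exp_mulINR; apply: exp_le.
  rewrite Rinv_mult.
  have : 0 <= INR (minn (mu E) (L n)) := pos_INR _.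
  nra.
have ht1 := term1 hs1 hj.
have heps : eps n <= exp (41 - INR n / 16).
  rewrite /eps -exp_Ropp -exp_plus; apply: exp_le.
  have : INR n <= 16 * INR (L n %/ 2) + 16.
    have : (n <= 16 * (L n %/ 2) + 16)%nat by rewrite /L; lia.
    move=> /leP /le_INR; rewrite plus_INR mult_INR /=; lra.
  lra.
have hlkK : lk <= INR k.
  have := exp_ineq1_le lk; rewrite /lk exp_ln; lra.
have hT3 : INR T <= INR n ^ 3.
  apply: Rle_trans hT _; rewrite /=; nra.
have hT0 := pos_INR T.
have ht2 := term2 (N := INR n) (T := INR T) (w := s ^ 2) ltac:(lra) (conj hT0 hT3) hw0 hww.
have : INR T * eps n <= INR T * exp (41 - INR n / 16) by apply: Rmult_le_compat_l.
have : 0 <= exp 20 * exp (- s ^ 2) by apply: Rmult_le_pos; [lra | exact: Rlt_le (exp_pos _)].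
have hexpw := exp_pos (- s ^ 2).
have : aa n T ^ minn (mu E) (L n) <= exp 1024 * exp (- s ^ 2) by lra.
rewrite !Rmult_plus_distr_r.
lra.
Qed.
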